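(* Fix parameters $\mathfrak h=(h,\varepsilon,\theta)$ for which condition (M.1) holds. Let $w_h,v_h\in\mathbb V_h$ satisfy $$-\Delta^\diamond_{\infty,\mathfrak h}w_h(z)\le-\Delta^\diamond_{\infty,\mathfrak h}v_h(z)\qquad\forall z\in\mathcal N_h^I,$$ and assume that either $-\Delta^\diamond_{\infty,\mathfrak h}w_h(z)\le0$ for every $z\in\mathcal N_h^I$, or $-\Delta^\diamond_{\infty,\mathfrak h}v_h(z)\ge0$ for every $z\in\mathcal N_h^I$. Then $$\max_{z\in\mathcal N_h}\big[w_h(z)-v_h(z)\big]=\max_{z\in\mathcal N_h^b}\big[w_h(z)-v_h(z)\big].$$
   Context: Setting: $\Omega\subset\mathbb R^d$ ($d\ge1$) is a bounded domain with continuous boundary. For $r>0$, $\Omega^{(r)}=\{x\in\Omega:\operatorname{dist}(x,\partial\Omega)>r\}$. $\mathcal T_h$ is a mesh of closed simplices, $h=\max_T\operatorname{diam}T$, $\Omega_h$ the interior of the union of the simplices, with $\Omega^{(h)}\subset\Omega_h\subset\Omega$; $\mathcal N_h$ is the set of vertices. $\mathbb V_h$ is the space of continuous piecewise linear functions on $\mathcal T_h$ with hat basis $\{\hat\varphi_z\}_{z\in\mathcal N_h}$ ($\hat\varphi_z(z')=\delta_{zz'}$), and $\mathcal I_h$ is the Lagrange interpolant. Parameters $\mathfrak h=(h,\varepsilon,\theta)$ with $\varepsilon\in[h,\operatorname{diam}\Omega]$, $0<\theta\le1$. Interior nodes $\mathcal N_h^I=\mathcal N_h\cap\Omega^{(2\varepsilon)}$;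 boundary nodes $\mathcal N_h^b=\mathcal N_h\setminus\mathcal N_h^I$. $\mathbb S_\theta$ is a finite symmetric subset of the unit sphere $\mathbb S$ such that each $v\in\mathbb S$ has $v_\theta\in\mathbb S_\theta$ with $|v-v_\theta|\le\theta$. For $z\in\mathcal N_h^I$, $\mathcal N_{\mathfrak h}(z)=\{z\}\cup\{z+\varepsilon v_\theta:v_\theta\in\mathbb S_\theta\}$, $S^+_{\mathfrak h}w(z)=\varepsilon^{-1}(\max_{x\in\mathcal N_{\mathfrak h}(z)}w(x)-w(z))$, $S^-_{\mathfrak h}w(z)=\varepsilon^{-1}(w(z)-\min_{x\in\mathcal N_{\mathfrak h}(z)}w(x))$, and $-\Delta^\diamond_{\infty,\mathfrak h}w(z)=-\varepsilon^{-1}(S^+_{\mathfrak h}\mathcal I_hw(z)-S^-_{\mathfrak h}\mathcal I_hw(z))$. Also $\widetilde{\mathcal N}_{\mathfrak h}(z)=\{z\}\cup\{z'\in\mathcal N_h:\exists v_\theta\in\mathbb S_\theta,\ \hat\varphi_{z'}(z+\varepsilon v_\theta)>0\}$. Condition (M.1): for every nonempty $S\subset\mathcal N_h^I$ there exist $z\in S$ and $z'\in\mathcal N_h\setminus S$ with $z'\in\widetilde{\mathcal N}_{\mathfrak h}(z)$. *)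

(* Defs.v *)
From HB Require Import structures.
From mathcomp Require Import all_boot all_order all_algebra.
From mathcomp Require Import all_classical all_reals all_analysis.
Set Implicit Arguments. Unset Strict Implicit. Unset Printing Implicit Defensive.
Import Order.TTheory GRing.Theory Num.Theory.
Import numFieldNormedType.Exports.
Local Open Scope classical_set_scope.
Local Open Scope ring_scope.

Section Defs.
Variable R : realType.
Variable n : nat.
Local Notation pt := 'rV[R]_n.

Definition enorm (x : pt) : R := Num.sqrt (\sum_(i < n) x 0 i ^+ 2).
Definition dot (a x : pt) : R := \sum_(i < n) a 0 i * x 0 i.

Definition bdry (O : set pt) : set pt := closure O `\` interior O.
Definition dist_to (x : pt) (A : set pt) : R := inf [set enorm (x - y) | y in A].
Definition inner_set (O : set pt) (r : R) : set pt :=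
  [set x | O x /\ r < dist_to x (bdry O)].
Definition diam (A : set pt) : R := sup [set enorm (x - y) | x in A & y in A].

Definition bounded_domain (O : set pt) : Prop :=
  [/\ O !=set0, open O, connected O & exists B : R, forall x, O x -> enorm x <= B].

Definition simplex := {ffun 'I_n.+1 -> pt}.
Definition conv (s : seq pt) : set pt :=
  [set x | exists l : 'I_(size s) -> R,
     [/\ forall i, 0 <= l i, \sum_i l i = 1 & x = \sum_i l i *: s`_i]].
Definition verts (T : simplex) : seq pt := [seq T i | i <- enum 'I_n.+1].
Definition simplex_set (T : simplex) : set pt := conv (verts T).
Definition affinely_indep (T : simplex) : Prop :=
  forall c : 'I_n.+1 -> R, \sum_i c i = 0 -> \sum_i c i *: T i = 0 ->
    forall i, c i = 0.
(* a (conforming) mesh of nondegenerate closed simplices *)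
Definition is_mesh (M : seq simplex) : Prop :=
  (forall T, T \in M -> affinely_indep T) /\
  (forall T1 T2, T1 \in M -> T2 \in M ->
     simplex_set T1 `&` simplex_set T2 = conv [seq x <- verts T1 | x \in verts T2]).
Definition mesh_union (M : seq simplex) : set pt :=
  [set x | exists2 T, T \in M & simplex_set T x].
Definition meshsize (M : seq simplex) : R :=
  \big[Num.max/0]_(T <- M) diam (simplex_set T).
Definition Omega_h (M : seq simplex) : set pt := interior (mesh_union M).
Definition nodes (M : seq simplex) : seq pt := undup (flatten [seq verts T | T <- M]).

Definition affine_on (A : set pt) (w : pt -> R) : Prop :=
  exists (a : pt) (b : R), forall x, A x -> w x = dot a x + b.
Definition in_Vh (M : seq simplex) (w : pt -> R) : Prop :=
  {within mesh_union M, continuous w} /\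
  (forall T, T \in M -> affine_on (simplex_set T) w).
Definition hat_basis (M : seq simplex) (phi : pt -> pt -> R) : Prop :=
  forall z, z \in nodes M ->
    in_Vh M (phi z) /\ (forall z', z' \in nodes M -> phi z z' = (z == z')%:R).
Definition interp (M : seq simplex) (phi : pt -> pt -> R) (w : pt -> R) (x : pt) : R :=
  \sum_(z <- nodes M) w z * phi z x.

Definition sphere_net (th : R) (S : seq pt) : Prop :=
  [/\ forall u, u \in S -> enorm u = 1,
      forall u, u \in S -> - u \in S &
      forall u, enorm u = 1 -> exists2 u', u' \in S & enorm (u - u') <= th].

Definition stencil (eps : R) (S : seq pt) (z : pt) : seq pt :=
  z :: [seq z + eps *: u | u <- S].
Definition Splus M phi eps S (w : pt -> R) (z : pt) : R :=
  eps^-1 * (\big[Num.max/interp M phi w z]_(x <- stencil eps S z) interp M phi w x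
            - interp M phi w z).
Definition Sminus M phi eps S (w : pt -> R) (z : pt) : R :=
  eps^-1 * (interp M phi w z
            - \big[Num.min/interp M phi w z]_(x <- stencil eps S z) interp M phi w x).
(* mlap ... w z  =  - Delta^diamond_{infty,h} w (z) *)
Definition mlap M phi eps S (w : pt -> R) (z : pt) : R :=
  - eps^-1 * (Splus M phi eps S w z - Sminus M phi eps S w z).

Definition inodes (O : set pt) M (eps : R) : seq pt :=
  [seq z <- nodes M | `[< inner_set O (2 * eps) z >]].
Definition bnodes (O : set pt) M (eps : R) : seq pt :=
  [seq z <- nodes M | ~~ `[< inner_set O (2 * eps) z >]].

Definition tnbhd M (phi : pt -> pt -> R) (eps : R) (S : seq pt) (z z' : pt) : Prop :=
  z' = z \/ (z' \in nodes M /\ exists2 u, u \in S & 0 < phi z' (z + eps *: u)).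
Definition condM1 (O : set pt) M phi eps S : Prop :=
  forall A : set pt, A !=set0 -> (forall z, A z -> z \in inodes O M eps) ->
    exists z z', [/\ A z, z' \in nodes M, ~ A z' & tnbhd M phi eps S z z'].

End Defs.

Definition maxl (R : realType) (s : seq R) : R := foldr Num.max (head 0 s) s.

(* continuous (C^0) boundary, in R^(k+1): locally the strict epigraph of a
   continuous function after a rigid change of coordinates *)
Definition C0_boundary (R : realType) (k : nat) (O : set 'rV[R]_k.+1) : Prop :=
  forall x0, bdry O x0 -> exists r : R, 0 < r /\
    exists Q : 'M[R]_k.+1, Q *m Q^T = 1%:M /\
    exists g : 'rV[R]_k -> R, continuous g /\
      forall y, enorm (y - x0) < r ->
        (O y <-> g (\row_(i < k) ((y - x0) *m Q) 0 (widen_ord (leqnSn k) i))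
                   < ((y - x0) *m Q) 0 ord_max).

(* Main.v *)
Require Import Defs.
From HB Require Import structures.
From mathcomp Require Import all_boot all_order all_algebra.
From mathcomp Require Import all_classical all_reals all_analysis.
From mathcomp Require Import ring lra.
Import Order.TTheory GRing.Theory Num.Theory.
Local Open Scope classical_set_scope.
Local Open Scope ring_scope.

Set Implicit Arguments.
Unset Strict Implicit.

Module Aux.
Import numFieldNormedType.Exports.
Section Enorm.
Variable R : realType.
Variable n : nat.
Local Notation pt := 'rV[R]_n.

Lemma enorm_ge0 (x : pt) : 0 <= enorm x.
Proof. exact: sqrtr_ge0. Qed.

Lemma enormZ (c : R) (x : pt) : enorm (c *: x) = `|c| * enorm x.
Proof.
rewrite /enorm.
have -> : \sum_(i < n) (c *: x) 0 i ^+ 2 = c ^+ 2 * \sum_(i < n) x 0 i ^+ 2.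
  by rewrite mulr_sumr; apply: eq_bigr => i _; rewrite mxE exprMn.
by rewrite sqrtrM ?sqr_ge0 // sqrtr_sqr.
Qed.

Lemma enormN (x : pt) : enorm (- x) = enorm x.
Proof. by rewrite -scaleN1r enormZ normrN normr1 mul1r. Qed.

Lemma cauchy_schwarz (a b : 'I_n -> R) :
  (\sum_i a i * b i) ^+ 2 <= (\sum_i a i ^+ 2) * (\sum_i b i ^+ 2).
Proof.
have H : 0 <= \sum_i \sum_j (a i * b j - a j * b i) ^+ 2.
  by apply: sumr_ge0 => i _; apply: sumr_ge0 => j _; exact: sqr_ge0.
have E : \sum_i \sum_j (a i * b j - a j * b i) ^+ 2 =
   2 * ((\sum_i a i ^+ 2) * (\sum_i b i ^+ 2) - (\sum_i a i * b i) ^+ 2).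
  have E1 : \sum_i \sum_j (a i * b j - a j * b i) ^+ 2 =
     \sum_i \sum_j (a i ^+ 2 * b j ^+ 2) + \sum_i \sum_j (a j ^+ 2 * b i ^+ 2)
     - 2 * \sum_i \sum_j (a i * b i) * (a j * b j).
    rewrite mulr_sumr -!big_split -sumrB; apply: eq_bigr => i _.
    rewrite mulr_sumr -!big_split -sumrB; apply: eq_bigr => j _.
    by rewrite /=; ring.
  rewrite E1.
  have -> : \sum_i \sum_j (a i * b i) * (a j * b j) =
      \sum_i (a i * b i) * \sum_j (a j * b j).
    by apply: eq_bigr => i _; rewrite mulr_sumr.
  have -> : \sum_i \sum_j (a i ^+ 2 * b j ^+ 2) =
      (\sum_i a i ^+ 2) * (\sum_i b i ^+ 2).
    by rewrite mulr_suml; apply: eq_bigr => i _; rewrite mulr_sumr.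
  have -> : \sum_i \sum_j (a j ^+ 2 * b i ^+ 2) =
      (\sum_i a i ^+ 2) * (\sum_i b i ^+ 2).
    rewrite mulrC mulr_suml; apply: eq_bigr => i _; rewrite mulr_sumr.
    by apply: eq_bigr => j _; rewrite mulrC.
  by rewrite -mulr_suml expr2; ring.
rewrite E in H; rewrite -subr_ge0; lra.
Qed.

Lemma enormD (x y : pt) : enorm (x + y) <= enorm x + enorm y.
Proof.
rewrite /enorm.
set A := \sum_(i < n) x 0 i ^+ 2. set B := \sum_(i < n) y 0 i ^+ 2.
set C := \sum_(i < n) x 0 i * y 0 i.
have A0 : 0 <= A by apply: sumr_ge0 => i _; exact: sqr_ge0.
have B0 : 0 <= B by apply: sumr_ge0 => i _; exact: sqr_ge0.
have E : \sum_(i < n) (x + y) 0 i ^+ 2 = A + 2 * C + B.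
  rewrite /A /B /C mulr_sumr -!big_split; apply: eq_bigr => i _.
  by rewrite mxE /=; ring.
have CS : C <= Num.sqrt A * Num.sqrt B.
  have h := cauchy_schwarz (fun i => x 0 i) (fun i => y 0 i).
  rewrite -/A -/B -/C in h.
  have : `|C| <= Num.sqrt A * Num.sqrt B.
    rewrite -sqrtrM // -sqrtr_sqr ler_sqrt //; exact: mulr_ge0.
  move=> h2; exact: le_trans (ler_norm C) h2.
rewrite E -[X in _ <= X]ger0_norm ?addr_ge0 ?sqrtr_ge0 //.
rewrite -sqrtr_sqr ler_sqrt ?sqr_ge0 //.
have hA := sqr_sqrtr A0. have hB := sqr_sqrtr B0.
rewrite sqrrD hA hB. lra.
Qed.

End Enorm.

Section Maxes.
Variable R : realType.

Lemma foldr_maxP (x0 : R) (s : seq R) :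
  [/\ forall y, y \in s -> y <= foldr Num.max x0 s,
      x0 <= foldr Num.max x0 s &
      foldr Num.max x0 s = x0 \/ foldr Num.max x0 s \in s].
Proof.
elim: s => [|a s [IH1 IH2 IH3]] /=; first by split => //; left.
split.
- move=> y; rewrite inE => /orP [/eqP -> | ys]; first by rewrite le_max lexx.
  by rewrite le_max IH1 ?orbT.
- by rewrite le_max IH2 orbT.
- case: (leP a (foldr Num.max x0 s)) => h.
  + by case: IH3 => [->|hs]; [left | right; rewrite inE hs orbT].
  + by right; rewrite inE eqxx.
Qed.

Lemma maxlP (s : seq R) : s != [::] ->
  maxl s \in s /\ forall y, y \in s -> y <= maxl s.
Proof.
case: s => [//|a s] _; rewrite /maxl /=.
have [H1 H2 H3] := foldr_maxP a s.
split.
- case: (leP a (foldr Num.max a s)) => h.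
  + by case: H3 => [->|hs]; rewrite inE ?eqxx ?hs ?orbT.
  + by rewrite inE eqxx.
- move=> y; rewrite inE => /orP [/eqP ->|ys]; first by rewrite le_max lexx.
  by rewrite le_max H1 ?orbT.
Qed.

Lemma bigmaxP (T : eqType) (xs : seq T) (F : T -> R) (x0 : R) :
  [/\ forall x, x \in xs -> F x <= \big[Num.max/x0]_(y <- xs) F y,
      x0 <= \big[Num.max/x0]_(y <- xs) F y &
      \big[Num.max/x0]_(y <- xs) F y = x0 \/
      exists2 x, x \in xs & \big[Num.max/x0]_(y <- xs) F y = F x].
Proof.
elim: xs => [|a s [IH1 IH2 IH3]]; first by rewrite big_nil; split => //; left.
rewrite big_cons; split.
- move=> y; rewrite inE => /orP [/eqP -> | ys]; first by rewrite le_max lexx.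
  by rewrite le_max IH1 ?orbT.
- by rewrite le_max IH2 orbT.
- case: (leP (F a) (\big[Num.max/x0]_(y <- s) F y)) => h.
  + case: IH3 => [->|[x xs ->]]; [left | right] => //.
    by exists x; rewrite // inE xs orbT.
  + by right; exists a; rewrite // inE eqxx.
Qed.

Lemma bigminP (T : eqType) (xs : seq T) (F : T -> R) (x0 : R) :
  [/\ forall x, x \in xs -> \big[Num.min/x0]_(y <- xs) F y <= F x,
      \big[Num.min/x0]_(y <- xs) F y <= x0 &
      \big[Num.min/x0]_(y <- xs) F y = x0 \/
      exists2 x, x \in xs & \big[Num.min/x0]_(y <- xs) F y = F x].
Proof.
elim: xs => [|a s [IH1 IH2 IH3]]; first by rewrite big_nil; split => //; left.
rewrite big_cons; split.
- move=> y; rewrite inE => /orP [/eqP -> | ys]; first by rewrite ge_min lexx.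
  by rewrite ge_min IH1 ?orbT.
- by rewrite ge_min IH2 orbT.
- case: (leP (F a) (\big[Num.min/x0]_(y <- s) F y)) => h.
  + by right; exists a; rewrite // inE eqxx.
  + case: IH3 => [->|[x xs ->]]; [left | right] => //.
    by exists x; rewrite // inE xs orbT.
Qed.

End Maxes.

Section Mesh.
Variable R : realType.
Variable n : nat.
Local Notation pt := 'rV[R]_n.

Lemma sum_delta (N : seq pt) (f : pt -> R) (a : pt) : uniq N -> a \in N ->
  \sum_(y <- N) f y * (y == a)%:R = f a.
Proof.
move=> uN aN; rewrite (big_rem a) //= eqxx mulr1 big1_seq ?addr0 //.
move=> y /andP [_ yN]; case: eqP => [e|]; last by rewrite mulr0.
by rewrite e (mem_rem_uniqF a uN) in yN.
Qed.

Lemma verts_nodes (M : seq (simplex R n)) T x :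
  T \in M -> x \in verts T -> x \in nodes M.
Proof.
move=> TM xT; rewrite /nodes mem_undup; apply/flattenP.
by exists (verts T) => //; apply: map_f.
Qed.

Lemma vert_in_simplex (T : simplex R n) x : x \in verts T -> simplex_set T x.
Proof.
move=> xT; have iT := index_mem x (verts T); rewrite xT in iT.
pose i : 'I_(size (verts T)) := Ordinal iT.
exists (fun j => (j == i)%:R); split.
- by move=> j; rewrite ler0n.
- by rewrite (bigD1 i) //= eqxx big1 ?addr0 // => j /negbTE ->.
- rewrite (bigD1 i) //= eqxx scale1r big1 ?addr0 ?nth_index //.
  by move=> j /negbTE ->; rewrite scale0r.
Qed.

Lemma dot_sum p (a : pt) (l : 'I_p -> R) (s : 'I_p -> pt) :
  dot a (\sum_i l i *: s i) = \sum_i l i * dot a (s i).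
Proof.
rewrite /dot.
under eq_bigr => j _ do rewrite summxE mulr_sumr.
rewrite exchange_big; apply: eq_bigr => i _; rewrite mulr_sumr.
by apply: eq_bigr => j _; rewrite mxE; ring.
Qed.

Lemma mesh_rep (M : seq (simplex R n)) phi : hat_basis M phi ->
  forall x, mesh_union M x -> exists p (s : 'I_p -> pt) (l : 'I_p -> R),
  [/\ forall i, s i \in nodes M, forall i, 0 <= l i, \sum_i l i = 1 &
      forall y, y \in nodes M -> phi y x = \sum_i l i * (y == s i)%:R].
Proof.
move=> hb x [T TM [l [l0 l1 ->]]].
exists (size (verts T)), (fun i => (verts T)`_i), l; split => //.
- move=> i /=; apply: (@verts_nodes M T _ TM); exact: mem_nth.
- move=> y yN; have [[_ aff] _] := hb y yN.
  have [a [b hab]] := aff T TM.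
  have vin : forall i : 'I_(size (verts T)), simplex_set T (verts T)`_i.
    by move=> i; apply: vert_in_simplex; apply: mem_nth.
  rewrite hab; last by exists l.
  rewrite dot_sum.
  have -> : b = \sum_i l i * b by rewrite -mulr_suml l1 mul1r.
  rewrite -big_split; apply: eq_bigr => i _ /=.
  have [_ hd] := hb y yN.
  rewrite -mulrDr -hab // hd //; apply: (@verts_nodes M T _ TM); exact: mem_nth.
Qed.

Lemma interp_rep (M : seq (simplex R n)) phi (f : pt -> R) x p
  (s : 'I_p -> pt) (l : 'I_p -> R) :
  (forall i, s i \in nodes M) ->
  (forall y, y \in nodes M -> phi y x = \sum_i l i * (y == s i)%:R) ->
  interp M phi f x = \sum_i l i * f (s i).
Proof.
move=> sN hphi; rewrite /interp big_seq.
under eq_bigr => y yN do rewrite hphi // mulr_sumr.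
rewrite -big_seq exchange_big; apply: eq_bigr => i _.
under eq_bigr => y _ do rewrite mulrCA.
by rewrite -mulr_sumr sum_delta // /nodes undup_uniq.
Qed.

Lemma interp_node (M : seq (simplex R n)) phi (f : pt -> R) z :
  hat_basis M phi -> z \in nodes M -> interp M phi f z = f z.
Proof.
move=> hb zN; rewrite /interp big_seq.
under eq_bigr => y yN do rewrite (proj2 (hb y yN)) //.
by rewrite -big_seq sum_delta // /nodes undup_uniq.
Qed.

End Mesh.

Section Geo.
Variable R : realType.
Variable n : nat.
Local Notation pt := 'rV[R]_n.

Lemma seg_in (O : set pt) (z d : pt) : open O -> O z ->
  (forall y, bdry O y -> enorm d < enorm (z - y)) -> O (z + d).
Proof.
move=> oO Oz hb.
pose f := fun t : R => z + t *: d.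
have cf : continuous f.
  move=> t; apply: cvgD; first exact: cvg_cst.
  by apply: cvgZr_tmp; exact: cvg_id.
have cA : connected (f @` `[0, 1]).
  apply: connected_continuous_connected; first exact: segment_connected.
  exact: continuous_subspaceT.
have E : f @` `[0, 1] `&` O = f @` `[0, 1].
  apply: cA.
  - exists z; split; last exact: Oz.
    exists 0; first by rewrite /= in_itv /= lexx ler01.
    by rewrite /f scale0r addr0.
  - by exists O.
  - exists (closure O); first exact: closed_closure.
    apply/seteqP; split => y [Ay Oy]; split => //.
      exact: subset_closure.
    apply: contrapT => nOy.
    have by' : bdry O y by split => //; rewrite (proj1 (interior_id O) oO).
    have := hb y by'.
    case: Ay => t; rewrite /= in_itv /= => /andP [t0 t1] <-.
    rewrite /f opprD addrA subrr add0r enormN enormZ ger0_norm //.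
    have := enorm_ge0 d; nra.
have : (f @` `[0, 1]) (f 1).
  by exists 1 => //; rewrite /= in_itv /= lexx ler01.
by rewrite -E => -[_]; rewrite /f scale1r.
Qed.

Lemma dist_lb (A : set pt) z y : A y -> dist_to z A <= enorm (z - y).
Proof.
move=> Ay; apply: ge_inf; last by exists y.
by exists 0 => _ [y' _ <-]; exact: enorm_ge0.
Qed.

Lemma stencil_in (O : set pt) (M : seq (simplex R n)) eps u z :
  open O -> inner_set O (meshsize M) `<=` Omega_h M -> meshsize M <= eps ->
  0 <= eps -> enorm u = 1 -> inner_set O (2 * eps) z ->
  mesh_union M (z + eps *: u).
Proof.
move=> oO hin hme e0 u1 [Oz hD].
set D := dist_to z (bdry O) in hD.
have hy : forall y, bdry O y -> D <= enorm (z - y) by move=> y; exact: dist_lb.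
have nb : bdry O !=set0.
  apply/set0P/eqP => b0; move: hD; rewrite /D /dist_to b0 image_set0 inf0.
  lra.
have en : enorm (eps *: u) = eps by rewrite enormZ u1 mulr1 ger0_norm.
have Ox : O (z + eps *: u).
  apply: seg_in => // y /hy; rewrite en; lra.
apply: interior_subset; apply: hin; split => //.
have : D - eps <= dist_to (z + eps *: u) (bdry O).
  apply: lb_le_inf.
    by case: nb => y0 by0; exists (enorm (z + eps *: u - y0)); exists y0.
  move=> _ [y by0 <-].
  have := enormD (- (eps *: u)) (z + eps *: u - y).
  have -> : - (eps *: u) + (z + eps *: u - y) = z - y.
    by rewrite [z + _]addrC -!addrA addKr.
  rewrite enormN en.
  have := hy y by0; lra.
lra.
Qed.

End Geo.

Section Loc.
Variable R : realType.

Lemma local_const (T : eqType) (xs : seq T) (z : T) (W V : T -> R) (e : R) :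
  0 < e ->
  (forall x, x \in xs -> W x - V x <= W z - V z) ->
  - e * (e * (\big[Num.max/W z]_(x <- xs) W x - W z)
         - e * (W z - \big[Num.min/W z]_(x <- xs) W x)) <=
  - e * (e * (\big[Num.max/V z]_(x <- xs) V x - V z)
         - e * (V z - \big[Num.min/V z]_(x <- xs) V x)) ->
  ((- e * (e * (\big[Num.max/W z]_(x <- xs) W x - W z)
         - e * (W z - \big[Num.min/W z]_(x <- xs) W x)) <= 0 /\
    forall x, x \in xs -> W x - V x = W z - V z -> V x <= V z) \/
   (0 <= - e * (e * (\big[Num.max/V z]_(x <- xs) V x - V z)
         - e * (V z - \big[Num.min/V z]_(x <- xs) V x)) /\
    forall x, x \in xs -> W x - V x = W z - V z -> W z <= W x)) ->
  forall x, x \in xs -> W x = W z /\ V x = V z.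
Proof.
move=> e0 h1.
set MW := \big[Num.max/W z]_(x <- xs) W x.
set mW := \big[Num.min/W z]_(x <- xs) W x.
set MV := \big[Num.max/V z]_(x <- xs) V x.
set mV := \big[Num.min/V z]_(x <- xs) V x.
have [ubW iMW atW] := bigmaxP xs W (W z).
have [lbW imW atmW] := bigminP xs W (W z).
have [ubV iMV atV] := bigmaxP xs V (V z).
have [lbV imV atmV] := bigminP xs V (V z).
rewrite -/MW -/mW -/MV -/mV in ubW iMW atW lbW imW atmW ubV iMV atV lbV imV atmV *.
have k0 : 0 < e * e by rewrite mulr_gt0.
have E : forall A B, - e * (e * A - e * B) = - (e * e) * (A - B)
  by move=> A B; ring.
rewrite !E => hm hc.
have hm' : (MV - V z) - (V z - mV) <= (MW - W z) - (W z - mW).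
  by move: hm; rewrite !mulNr lerN2 ler_pM2l.
have PWle : MW - W z <= MV - V z.
  case: atW => [e1|[x xin e1]]; first lra.
  have := h1 x xin; have := ubV x xin; lra.
have QVle : V z - mV <= W z - mW.
  case: atmV => [e1|[x xin e1]]; first lra.
  have := h1 x xin; have := lbW x xin; lra.
have [P0 Q0] : MW - W z = 0 /\ W z - mW = 0 /\ MV - V z = 0 /\ V z - mV = 0.
  case: hc => [[hs hx]|[hs hx]].
  - have hs' : W z - mW <= MW - W z.
        by move: hs; rewrite mulNr oppr_le0 pmulr_rge0 // subr_ge0.
    have : MW - W z <= 0.
      case: atW => [e1|[x xin e1]]; first lra.
      have eq1 : W x - V x = W z - V z.
        apply/eqP; rewrite eq_le h1 //=; have := ubV x xin; lra.
      have := hx x xin eq1; have := ubV x xin; lra.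
    lra.
  - have hs' : MV - V z <= V z - mV.
      by move: hs; rewrite mulNr oppr_ge0 pmulr_rle0 // subr_le0.
    have : V z - mV <= 0.
      case: atmV => [e1|[x xin e1]]; first lra.
      have eq1 : W x - V x = W z - V z.
        apply/eqP; rewrite eq_le h1 //=; have := lbW x xin; lra.
      have := hx x xin eq1; have := lbW x xin; lra.
    lra.
move=> x xin; case: Q0 => Q0 [P1 Q1].
have := ubW x xin; have := lbW x xin; have := ubV x xin; have := lbV x xin.
move=> *; split; lra.
Qed.

End Loc.


Section Conv.
Variable R : realType.

Lemma convex_eq p (l c : 'I_p -> R) : (forall i, 0 <= l i) ->
  \sum_i l i * c i = 0 -> (forall i, 0 < l i -> 0 <= c i) ->
  forall i, 0 < l i -> c i = 0.
Proof.
move=> l0 hs hc.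
have t0 : forall i, 0 <= l i * c i.
  move=> i; have := l0 i; rewrite le_eqVlt => /orP [/eqP <-|li].
    by rewrite mul0r.
  by rewrite mulr_ge0 // ?hc // ltW.
have := (psumr_eq0P (P := predT) (fun i _ => t0 i)) hs.
move=> h i li; have /eqP := h i isT; rewrite mulf_eq0 => /orP [/eqP e|/eqP //].
by rewrite e ltxx in li.
Qed.

Lemma convA p (l c d : 'I_p -> R) (m gm : R) : (forall i, 0 <= l i) ->
  \sum_i l i = 1 -> (forall i, c i <= m) -> \sum_i l i * c i = m ->
  (forall i, c i = m -> d i <= gm) ->
  [/\ forall i, 0 < l i -> c i = m, \sum_i l i * d i <= gm &
      (\sum_i l i * d i = gm -> forall i, 0 < l i -> d i = gm)].
Proof.
move=> l0 l1 cm hs hd.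
have hc : forall i, 0 < l i -> c i = m.
  have e : \sum_i l i * (m - c i) = 0.
    rewrite (eq_bigr (fun i => l i * m - l i * c i)) => [|i _]; last by rewrite mulrBr.
    by rewrite sumrB -mulr_suml l1 mul1r hs subrr.
  have cm' : forall j, 0 < l j -> 0 <= m - c j by move=> j _; rewrite subr_ge0.
  move=> i li; have := convex_eq l0 e cm' li.
  by move/eqP; rewrite subr_eq0 => /eqP ->.
have e2 : \sum_i l i * (gm - d i) = gm - \sum_i l i * d i.
  rewrite (eq_bigr (fun i => l i * gm - l i * d i)) => [|i _]; last by rewrite mulrBr.
  by rewrite sumrB -mulr_suml l1 mul1r.
have hge : forall i, 0 < l i -> 0 <= gm - d i.
  by move=> i li; rewrite subr_ge0; apply: hd; apply: hc.
split => //.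
- rewrite -subr_ge0 -e2; apply: sumr_ge0 => i _.
  have := l0 i; rewrite le_eqVlt => /orP [/eqP <-|li]; first by rewrite mul0r.
  by rewrite mulr_ge0 // ?hge // ltW.
- move=> hsd i li; have := convex_eq l0 _ hge li; rewrite e2 hsd subrr => /(_ erefl).
  by move/eqP; rewrite subr_eq0 => /eqP ->.
Qed.

Lemma conv_le p (l c : 'I_p -> R) (m : R) : (forall i, 0 <= l i) ->
  \sum_i l i = 1 -> (forall i, c i <= m) -> \sum_i l i * c i <= m.
Proof.
move=> l0 l1 cm; rewrite -[X in _ <= X]mul1r -l1 mulr_suml.
by apply: ler_sum => i _; apply: ler_wpM2l.
Qed.
End Conv.

End Aux.
Import Aux.

Unset Implicit Arguments.

Theorem theorem3p3 (R : realType) (k : nat) (O : set 'rV[R]_k.+1)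
  (M : seq (simplex R k.+1)) (phi : 'rV[R]_k.+1 -> 'rV[R]_k.+1 -> R)
  (eps th : R) (S : seq 'rV[R]_k.+1) (w v : 'rV[R]_k.+1 -> R) :
  bounded_domain O -> C0_boundary O ->
  is_mesh M -> inner_set O (meshsize M) `<=` Omega_h M -> Omega_h M `<=` O ->
  hat_basis M phi ->
  meshsize M <= eps -> eps <= diam O -> 0 < th -> th <= 1 -> sphere_net th S ->
  condM1 O M phi eps S ->
  in_Vh M w -> in_Vh M v ->
  (forall z, z \in inodes O M eps -> mlap M phi eps S w z <= mlap M phi eps S v z) ->
  ((forall z, z \in inodes O M eps -> mlap M phi eps S w z <= 0) \/
   (forall z, z \in inodes O M eps -> 0 <= mlap M phi eps S v z)) ->
  maxl [seq w z - v z | z <- nodes M] = maxl [seq w z - v z | z <- bnodes O M eps].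
Proof.
move=> [_ oO _ _] _ _ hin _ hb hme _ _ _ [hS1 _ _] hM1 _ _ hcmp hsign.
have e0 : 0 <= eps.
  apply: le_trans hme; rewrite /meshsize.
  by have [_ h _] := bigmaxP M (fun T => diam (simplex_set T)) 0.
have [hN|hN] := eqVneq (nodes M) [::].
  by rewrite /bnodes hN.
have nL : [seq w z - v z | z <- nodes M] != [::].
  by move: hN; case: (nodes M).
have [mL mub] := maxlP nL.
set m := maxl [seq w z - v z | z <- nodes M] in mL mub *.
have mub' : forall y, y \in nodes M -> w y - v y <= m.
  by move=> y yN; apply: mub; apply: map_f.
suff [b bB Ub] : exists2 b, b \in bnodes O M eps & w b - v b = m.
  have nb : [seq w z - v z | z <- bnodes O M eps] != [::].
    by apply/eqP => h; have := map_f (fun z => w z - v z) bB; rewrite h.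
  have [mbin mbub] := maxlP nb.
  apply/eqP; rewrite eq_le; apply/andP; split.
  - by rewrite -Ub; apply: mbub; apply: map_f.
  - move: mbin => /mapP [y yB ->]; apply: mub'.
    by move: yB; rewrite mem_filter => /andP [_ ->].
apply: contrapT => hno.
have Ain : forall y, y \in nodes M -> w y - v y = m -> y \in inodes O M eps.
  move=> y yN Uy; rewrite /inodes mem_filter yN andbT.
  case: (boolP `[< inner_set O (2 * eps) y >]) => // h; exfalso.
  by apply: hno; exists y => //; rewrite /bnodes mem_filter h yN.
have inner : forall y, y \in inodes O M eps ->
    inner_set O (2 * eps) y /\ y \in nodes M.
  by move=> y; rewrite mem_filter => /andP [/asboolP h yN].
set As := [seq y <- nodes M | w y - v y == m].
have AsP : forall y, (y \in As) = (w y - v y == m) && (y \in nodes M).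
  by move=> y; rewrite mem_filter.
have AsI : forall y, y \in As -> y \in inodes O M eps.
  by move=> y; rewrite AsP => /andP [/eqP h yN]; apply: Ain.
have As_ne : As != [::].
  move: mL => /mapP [y0 y0N e]; apply/eqP => hA.
  have : y0 \in As by rewrite AsP y0N -e eqxx.
  by rewrite hA.
have stin : forall z x, z \in inodes O M eps -> x \in stencil eps S z ->
    mesh_union M x.
  move=> z x zI; rewrite /stencil inE => /orP [/eqP ->| /mapP [u uS ->]].
  - have [_ zN] := inner z zI.
    move: zN; rewrite /nodes mem_undup => /flattenP [s /mapP [T TM ->] zT].
    by exists T => //; apply: vert_in_simplex.
  - exact: (stencil_in oO hin hme e0 (hS1 u uS) (proj1 (inner z zI))).
have repx : forall z x, z \in inodes O M eps -> x \in stencil eps S z ->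
    exists p (s : 'I_p -> 'rV[R]_k.+1) (l : 'I_p -> R),
    [/\ forall i, s i \in nodes M, forall i, 0 <= l i, \sum_i l i = 1,
        forall y, y \in nodes M -> phi y x = \sum_i l i * (y == s i)%:R &
        forall f, interp M phi f x = \sum_i l i * f (s i)].
  move=> z x zI xin.
  have [p [s [l [sN l0 l1 hphi]]]] := mesh_rep hb (stin z x zI xin).
  exists p, s, l; split => // f; exact: interp_rep.
have Usum : forall p (s : 'I_p -> 'rV[R]_k.+1) (l : 'I_p -> R) x,
    (forall f, interp M phi f x = \sum_i l i * f (s i)) ->
    \sum_i l i * (w (s i) - v (s i)) = interp M phi w x - interp M phi v x.
  move=> p s l x hf; rewrite !hf -sumrB.
  by apply: eq_bigr => i _; rewrite mulrBr.
have main : forall g : 'rV[R]_k.+1 -> R, (g = v \/ g = (fun y => - w y)) ->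
  (forall z, z \in As -> g z = maxl [seq g y | y <- As] ->
     forall x, x \in stencil eps S z ->
       interp M phi w x = w z /\ interp M phi v x = v z) -> False.
  move=> g hg hconst.
  set gm := maxl [seq g y | y <- As] in hconst.
  have ngA : [seq g y | y <- As] != [::].
    by rewrite -size_eq0 size_map size_eq0.
  have [gmin gmub] := maxlP ngA.
  have hne : (fun y => y \in As /\ g y = gm) !=set0.
    by move: gmin => /mapP [y yA e]; exists y.
  have hsub : forall y, (fun y => y \in As /\ g y = gm) y -> y \in inodes O M eps.
    by move=> y [yA _]; apply: AsI.
  have [z [z' [[zA gz] z'N nB tn]]] := hM1 _ hne hsub.
  case: tn => [ez | [_ [u uS pos]]]; first by apply: nB; rewrite ez.
  have zI := AsI z zA.
  have xin : z + eps *: u \in stencil eps S z.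
    by rewrite /stencil inE; apply/orP; right; exact: map_f.
  have [cw cv] := hconst z zA gz _ xin.
  have [p [s [l [sN l0 l1 hphi hf]]]] := repx z _ zI xin.
  have Um : w z - v z = m by move: zA; rewrite AsP => /andP [/eqP].
  have hsum : \sum_i l i * (w (s i) - v (s i)) = m.
    by rewrite (Usum _ _ _ _ hf) cw cv.
  have gsum : \sum_i l i * g (s i) = gm.
    rewrite -gz; case: hg => ->; first by rewrite -hf cv.
    by rewrite (eq_bigr (fun i => - (l i * w (s i)))) ?sumrN -?hf ?cw // => i _; rewrite mulrN.
  have [hc _ hd] := convA (d := fun i => g (s i)) l0 l1 (fun i => mub' _ (sN i)) hsum
    (fun i hi => gmub _ (map_f g (eq_ind_r (fun b => is_true b) (introT andP (conj (introT eqP hi) (sN i))) (AsP (s i))))).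
  have [i [li zi]] : exists i, 0 < l i /\ z' = s i.
    case: (pselect (exists i, 0 < l i /\ z' = s i)) => // hn; exfalso.
    have : \sum_i l i * (z' == s i)%:R <= 0.
      apply: sumr_le0 => i _; case: eqP => e; last by rewrite mulr0.
      rewrite mulr1 leNgt; apply/negP => li; apply: hn; exists i; split => //.
    by rewrite -hphi // leNgt pos.
  apply: nB; split.
  - by rewrite AsP z'N andbT zi; apply/eqP; exact: hc i li.
  - by rewrite zi; exact: hd gsum i li.
have AsIn : forall y, y \in nodes M -> w y - v y = m -> y \in As.
  by move=> y yN hy; rewrite AsP hy eqxx yN.
have ngA : forall g : 'rV[R]_k.+1 -> R, [seq g y | y <- As] != [::].
  by move=> g; rewrite -size_eq0 size_map size_eq0.
have pre : forall z, z \in As ->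
    [/\ z \in inodes O M eps, z \in nodes M & w z - v z = m].
  move=> z zA; split; first exact: AsI.
  - by have [_ ] := inner z (AsI z zA).
  - by move: zA; rewrite AsP => /andP [/eqP].
have eps0case : eps = 0 -> forall z x, z \in nodes M ->
    x \in stencil eps S z -> interp M phi w x = w z /\ interp M phi v x = v z.
  move=> ez z x zN; rewrite /stencil ez inE => /orP [/eqP ->|/mapP [u _ ->]].
  - by split; apply: interp_node.
  - by rewrite scale0r addr0; split; apply: interp_node.
have h1P : forall z, z \in As -> forall y, y \in stencil eps S z ->
    interp M phi w y - interp M phi v y <= interp M phi w z - interp M phi v z.
  move=> z zA y yin; have [zI zN Um] := pre z zA.
  rewrite (interp_node w hb zN) (interp_node v hb zN) Um.
  have [p [s [l [sN l0 l1 _ hf]]]] := repx z y zI yin.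
  rewrite -(Usum _ _ _ _ hf); apply: conv_le => // i; exact: mub' _ (sN i).
case: hsign => hs.
- apply: (main v (or_introl erefl)) => z zA gz x xin.
  have [zI zN Um] := pre z zA.
  case: (eqVneq eps 0) => [ez|en0]; first exact: eps0case.
  have ep : 0 < eps^-1 by rewrite invr_gt0 lt_neqAle eq_sym en0 e0.
  have [_ gmub] := maxlP (ngA v).
  have LC := local_const (xs := stencil eps S z) (z := z) (W := interp M phi w)
    (V := interp M phi v) ep (h1P z zA) (hcmp z zI).
  suff [-> ->] : interp M phi w x = interp M phi w z /\
      interp M phi v x = interp M phi v z.
    by split; apply: interp_node.
  apply: LC => //.
  left; split; first exact: (hs z zI).
  move=> y yin hy; have [p [s [l [sN l0 l1 _ hf]]]] := repx z y zI yin.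
  have hsum : \sum_i l i * (w (s i) - v (s i)) = m by rewrite (Usum _ _ _ _ hf) hy (interp_node w hb zN) (interp_node v hb zN).
  have hd : forall i, w (s i) - v (s i) = m -> v (s i) <= v z.
    by move=> i hi; rewrite gz; apply: gmub; apply: map_f; apply: AsIn.
  have [_ hle _] := convA (d := fun i => v (s i)) l0 l1 (fun i => mub' _ (sN i)) hsum hd.
  by rewrite hf (interp_node v hb zN).
- apply: (main (fun y => - w y) (or_intror erefl)) => z zA gz x xin.
  have [zI zN Um] := pre z zA.
  case: (eqVneq eps 0) => [ez|en0]; first exact: eps0case.
  have ep : 0 < eps^-1 by rewrite invr_gt0 lt_neqAle eq_sym en0 e0.
  have [_ gmub] := maxlP (ngA (fun y => - w y)).
  have LC := local_const (xs := stencil eps S z) (z := z) (W := interp M phi w)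
    (V := interp M phi v) ep (h1P z zA) (hcmp z zI).
  suff [-> ->] : interp M phi w x = interp M phi w z /\
      interp M phi v x = interp M phi v z.
    by split; apply: interp_node.
  apply: LC => //.
  right; split; first exact: (hs z zI).
  move=> y yin hy; have [p [s [l [sN l0 l1 _ hf]]]] := repx z y zI yin.
  have hsum : \sum_i l i * (w (s i) - v (s i)) = m by rewrite (Usum _ _ _ _ hf) hy (interp_node w hb zN) (interp_node v hb zN).
  have hd : forall i, w (s i) - v (s i) = m -> - w (s i) <= - w z.
    move=> i hi; rewrite gz; apply: gmub.
    by apply: (map_f (fun y => - w y)); apply: AsIn.
  have [_ hle _] := convA (d := fun i => - w (s i)) l0 l1 (fun i => mub' _ (sN i)) hsum hd.
  move: hle; rewrite (eq_bigr (fun i => - (l i * w (s i)))) => [|i _]; last by rewrite mulrN.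
  by rewrite sumrN lerN2 hf (interp_node w hb zN).
Qed.
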